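(* Let $K\ge2$, $a,b\ge1$ be integers. For any scheme with uncoded cache placement for the $(K,a,b)$ coded caching problem for location-based content, with load $R$, one has $$R\ \ge\ \frac{1}{a}\,\alpha_0+\frac{K-1}{2aK}\,\alpha_1 .$$
   Context: For integers $x\le y$, $[x:y]=\{x,x+1,\dots,y\}$ and $[n]=[1:n]$. For integers $c$ and $m\ge1$, $\langle c\rangle_m$ denotes the unique element of $\{1,\dots,m\}$ congruent to $c$ modulo $m$. The $(K,a,b)$ coded caching problem for location-based content: a server has $N=K(a+b)$ files $W_1,\dots,W_N$, each consisting of $B$ independent uniformly distributed bits. There are $K$ cache nodes, each storing $MB$ bits, and $K$ users, user $k$ having free access to cache node $k$ only. For $k\in[K]$ define $\mathcal D_{k,1}=[(k-1)(a+b)+1:ka+(k-1)b]$, $\mathcal D_{k,2}=[ka+(k-1)b+1:k(a+b)]$, $\mathcal D_{k,3}=\mathcal D_{\langle k+1\rangle_K,1}$, and $\mathcal D_k=\mathcal D_{k,1}\cup\mathcal D_{k,2}\cup\mathcal D_{k,3}$. A scheme consists of placement $Z_k=\phi_k(W_1,\dots,W_N)\in\{0,1\}^{MB}$ (fixed before demands), for each demand vector $\mathbf d\in\mathcal D_1\times\cdots\times\mathcal D_K$ a broadcast message $X=\psi(\mathbf d,W_1,\dots,W_N)\in\{0,1\}^{RB}$, and decoders such that user $k$ recovers $W_{d_k}$ exactly from $(\mathbf d,Z_k,X)$. The placement is uncoded if each $Z_k$ is a subset of the file bits copied directly. For uncoded placement, for $i\in[N]$ and $\mathcal T\subseteq[K]$,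 $W_{i,\mathcal T}$ denotes the set of bits of $W_i$ stored in exactly the cache nodes in $\mathcal T$ (and in no other cache node), and $|W_{i,\mathcal T}|$ its number of bits. Let $\mathcal C_1=\bigcup_{k\in[K]}\mathcal D_{k,1}$, and define $\alpha_0=\sum_{i\in\mathcal C_1}|W_{i,\emptyset}|/B$, $\alpha_1=\sum_{i\in\mathcal C_1}\sum_{j\in[K]}|W_{i,\{j\}}|/B$. *)

(* Defs.v *)
(* Conventions: files and cache nodes are 0-based
   (file i : 'I_N stands for W_{i+1}, cache node k : 'I_K for node k+1). *)
From mathcomp Require Import all_boot all_order all_algebra.
Unset Printing Implicit Defensive.

(* 0-based version of D_{k+1,1} = [k(a+b)+1 : k(a+b)+a] (shifted by -1) *)
Definition Dk1 (K a b k : nat) : pred nat :=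
  fun i => (k * (a + b) <= i) && (i < k * (a + b) + a).
(* 0-based version of D_{k+1,2} = [k(a+b)+a+1 : (k+1)(a+b)] *)
Definition Dk2 (K a b k : nat) : pred nat :=
  fun i => (k * (a + b) + a <= i) && (i < k.+1 * (a + b)).
(* D_{k+1,3} = D_{<k+2>_K,1}, i.e. 0-based node (k+1) mod K *)
Definition Dk3 (K a b k : nat) : pred nat := Dk1 K a b ((k + 1) %% K).
Definition Dk (K a b k : nat) : pred nat :=
  fun i => [|| Dk1 K a b k i, Dk2 K a b k i | Dk3 K a b k i].

Definition C1 (K a b : nat) (i : 'I_(K * (a + b))) : bool :=
  [exists k : 'I_K, Dk1 K a b k i].

Definition library (N B : nat) := {ffun 'I_N -> {ffun 'I_B -> bool}}.

Definition demand (K N : nat) := {ffun 'I_K -> 'I_N}.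
Definition valid_demand (K a b : nat) (d : demand K (K * (a + b))) : Prop :=
  forall k : 'I_K, Dk K a b k (d k).

(* Uncoded placement: cache node k stores exactly the file bits at positions S k.
   Its content Z_k (as a function of the library) is those bits (the other
   positions are masked to false; S is fixed, so this carries the same info). *)
Definition cache_content (K N B : nat) (S : 'I_K -> {set 'I_N * 'I_B}) (k : 'I_K)
  (W : library N B) : {ffun 'I_N * 'I_B -> bool} :=
  [ffun p => (p \in S k) && W p.1 p.2].

Definition Wsize (K N B : nat) (S : 'I_K -> {set 'I_N * 'I_B}) (i : 'I_N)
  (T : {set 'I_K}) : nat :=
  #|[set j : 'I_B | [set k | (i, j) \in S k] == T]|.

Local Open Scope ring_scope.

Definition alpha0 (K a b B : nat) (S : 'I_K -> {set 'I_(K * (a + b)) * 'I_B}) : rat :=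
  (\sum_(i | C1 K a b i) Wsize K (K * (a + b)) B S i set0)%N%:R / B%:R.
Definition alpha1 (K a b B : nat) (S : 'I_K -> {set 'I_(K * (a + b)) * 'I_B}) : rat :=
  (\sum_(i | C1 K a b i) \sum_(j : 'I_K) Wsize K (K * (a + b)) B S i [set j])%N%:R / B%:R.

(* Main.v *)
Require Import Defs.
From mathcomp Require Import all_boot all_order all_algebra zify ring.


Definition Pset (K N B : nat) (S : 'I_K -> {set 'I_N * 'I_B}) (d : demand K N)
  (pos : 'I_K -> nat) : {set 'I_N * 'I_B} :=
  [set p | [exists k, (p.1 == d k) && [forall k', (pos k' <= pos k) ==> (p \notin S k')]]].

Definition embed (N B : nat) (P : {set 'I_N * 'I_B}) (h : {ffun {p | p \in P} -> bool})
  : library N B :=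
  [ffun i => [ffun j => if insub (i, j) is Some q then h q else false]].

Lemma embed_val (N B : nat) (P : {set 'I_N * 'I_B}) (h : {ffun {p | p \in P} -> bool}) q :
  embed N B P h (val q).1 (val q).2 = h q.
Proof. by rewrite /embed !ffunE -surjective_pairing valK. Qed.

Lemma acyclic (K N B L : nat) (S : 'I_K -> {set 'I_N * 'I_B})
  (enc : demand K N -> library N B -> {ffun 'I_L -> bool})
  (dec : 'I_K -> demand K N -> {ffun 'I_N * 'I_B -> bool} ->
         {ffun 'I_L -> bool} -> {ffun 'I_B -> bool}) (d : demand K N)
  (Hdec : forall (W : library N B) (k : 'I_K),
       dec k d (cache_content K N B S k W) (enc d W) = W (d k))
  (pos : 'I_K -> nat) :
  (#|Pset K N B S d pos| <= L)%N.
Proof.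
set P := Pset K N B S d pos.
have inj : injective (fun h : {ffun {p | p \in P} -> bool} => enc d (embed N B P h)).
  move=> h h' /= He.
  set W := embed N B P h; set W' := embed N B P h'.
  have key : forall n k, (pos k < n)%N -> W (d k) = W' (d k).
    elim=> [//|n IH] k Hk.
    rewrite -!Hdec -He; congr (dec _ _ _ _).
    apply/ffunP => p. unfold cache_content. rewrite !ffunE.
    case: (boolP (p \in S k)) => //= pS.
    case: (boolP (p \in P)) => pP.
      have := pP; rewrite inE => /existsP [k'' /andP [/eqP e1 /forallP F]].
      case: (leqP (pos k) (pos k'')) => hl.
        by move: (F k); rewrite hl /= pS.
      have := IH k'' (leq_trans hl Hk); rewrite /W /W' /embed !ffunE => /ffunP /(_ p.2). by rewrite !ffunE e1.
    by rewrite -surjective_pairing insubN.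
  apply/ffunP => q.
  have := valP q; rewrite inE => /existsP [k'' /andP [/eqP e1 _]].
  by rewrite -!embed_val -/W -/W' e1 (key (pos k'').+1).
have := leq_card _ inj.
rewrite !card_ffun !card_bool card_ord card_sig.
by rewrite leq_exp2l.
Qed.

Lemma card_sum (T : finType) (X : pred T) : #|[set j | X j]| = (\sum_j (X j : nat))%N.
Proof. by rewrite -sum1_card big_mkcond /=; apply: eq_bigr => j _; rewrite inE; case: (X j). Qed.

Lemma sum_inj_le (I J : finType) (d : I -> J) (g : J -> nat) : injective d ->
  (\sum_k g (d k) <= \sum_i g i)%N.
Proof.
move=> dinj.
have -> : (\sum_k g (d k) = \sum_(i in [set d x | x in predT]) g i)%N.
  by rewrite big_imset //; move=> x y _ _; apply: dinj.
by rewrite [X in (_ <= X)%N](bigID (mem [set d x | x in predT])) /= leq_addr.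
Qed.

Definition loc (K N B : nat) (S : 'I_K -> {set 'I_N * 'I_B}) (i : 'I_N) (j : 'I_B) : {set 'I_K} :=
  [set k | (i, j) \in S k].

Lemma Wsize_sum K N B S i T : Wsize K N B S i T = (\sum_j (loc K N B S i j == T : nat))%N.
Proof. by rewrite /Wsize card_sum. Qed.

Lemma count_P (K N B : nat) (S : 'I_K -> {set 'I_N * 'I_B}) (d : demand K N)
  (pos : 'I_K -> nat) : injective d ->
  (\sum_k (Wsize K N B S (d k) set0 + \sum_(s | pos k < pos s) Wsize K N B S (d k) [set s])
    <= #|Pset K N B S d pos|)%N.
Proof.
move=> dinj.
rewrite -sum1_card [in X in (_ <= X)%N]big_mkcond /=.
have -> : (\sum_p (if p \in Pset K N B S d pos then 1 else 0) =
   \sum_i \sum_j (if (i, j) \in Pset K N B S d pos then 1 else 0))%N.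
  by rewrite pair_big /=; apply: eq_bigr => [[i j]] _.
have H := sum_inj_le _ _ d (fun i => \sum_j (if (i, j) \in Pset K N B S d pos then 1 else 0))%N dinj. refine (leq_trans _ H).
apply: leq_sum => k _.
rewrite Wsize_sum.
rewrite (eq_bigr _ (fun s _ => Wsize_sum K N B S (d k) [set s])).
rewrite exchange_big -big_split /=.
apply: leq_sum => j _.
case: (boolP ((d k, j) \in Pset K N B S d pos)) => HP.
  case: eqP => [E0|NE0].
    rewrite big1 // => s _; rewrite E0; case: eqP => // /setP /(_ s).
    by rewrite !inE eqxx.
  rewrite add0n.
  case: (pickP (fun s => (pos k < pos s)%N && (loc K N B S (d k) j == [set s]))) => [s0 /andP [hs0 /eqP E]|none].
    rewrite (bigD1 s0) //= E eqxx big1 // => s /andP [_ ns].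
    by case: eqP => // /setP /(_ s); rewrite !inE eqxx => /esym /eqP; rewrite (negbTE ns).
  by rewrite big1 // => s hs; move: (none s); rewrite hs /=; case: eqP.
have E0 : loc K N B S (d k) j != set0.
  apply: contra HP => /eqP E; rewrite inE; apply/existsP; exists k; rewrite eqxx /=.
  apply/forallP => k'; apply/implyP => _.
  by move/setP: E => /(_ k'); rewrite !inE => ->.
rewrite (negbTE E0) add0n big1 // => s hs; case: eqP => // E.
case/negP: HP; rewrite inE; apply/existsP; exists k; rewrite eqxx /=.
apply/forallP => k'; apply/implyP => hk'.
move/setP: E => /(_ k'); rewrite !inE => ->.
apply/eqP => ek; move: hs; rewrite -ek; move: hk'; lia.
Qed.


Definition posL (K : nat) (r k : 'I_K) : nat := if (k <= r)%N then (r - k)%N else (r + K - k)%N.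

Arguments posL {K}.
Lemma ordS_val K (k : 'I_K) : val (ordS k) = if k.+1 == K then 0%N else k.+1.
Proof.
rewrite /=; case: eqP => [->|ne]; first by rewrite modnn.
by rewrite modn_small //; have := ltn_ord k; lia.
Qed.

Lemma ord_pred_val K (k : 'I_K) : val (ord_pred k) = if val k == 0%N then K.-1 else (val k).-1.
Proof.
rewrite /=; have := ltn_ord k; case: eqP => [->|ne] hk.
  by rewrite add0n modn_small //; lia.
have -> : ((k + K).-1 = (k.-1) + K)%N by lia.
by rewrite modnDr modn_small //; lia.
Qed.

Lemma pointN (K r k s k' : nat) : (r < K)%N -> (k < K)%N -> (s < K)%N ->
  k' = (if k == 0%N then K.-1 else k.-1) -> r <> k' ->
  ((if (k <= r)%N then (r - k)%N else (r + K - k)%N) < (if (s <= r)%N then (r - s)%N else (r + K - s)%N))%N \/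
  ((if (s <= r)%N then (r - s)%N else (r + K - s)%N) < (if (k' <= r)%N then (r - k')%N else (r + K - k')%N))%N.
Proof.
move=> hr hk hs ->.
case: (eqVneq k 0%N) => [->|ne] /=; repeat case: ifP; move=> *; lia.
Qed.

Lemma point (K : nat) (r k s : 'I_K) :
  ((r != ord_pred k) <= (posL r k < posL r s) + (posL r s < posL r (ord_pred k)))%N.
Proof.
have := pointN _ _ _ _ _ (ltn_ord r) (ltn_ord k) (ltn_ord s) (ord_pred_val _ k).
rewrite /posL -(inj_eq val_inj) /=.
case: eqP => //= ne /(_ ne) [->|->] //.
by rewrite addnC.
Qed.


Lemma count_r (K : nat) (k s : 'I_K) :
  (K.-1 <= \sum_r ((posL r k < posL r s) + (posL r s < posL r (ord_pred k))))%N.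
Proof.
have H : (\sum_r (r != ord_pred k : nat) <=
  \sum_r ((posL r k < posL r s) + (posL r s < posL r (ord_pred k))))%N.
  by apply: leq_sum => r _; exact: point.
apply: leq_trans H.
rewrite (bigD1 (ord_pred k)) //= eqxx add0n.
rewrite (eq_bigr (fun _ => 1%N)); last by move=> r ->.
by rewrite sum1_card cardC1 card_ord.
Qed.

Lemma fidx_subproof (K a b : nat) (k : 'I_K) (j : 'I_a) : (k * (a + b) + j < K * (a + b))%N.
Proof.
have h1 : (k * (a + b) + j < k.+1 * (a + b))%N.
  by rewrite mulSn addnC ltn_add2r; apply: (leq_trans (ltn_ord j)); apply: leq_addr.
apply: (leq_trans h1); apply: leq_mul => //; exact: ltn_ord.
Qed.

Definition fidx (K a b : nat) (k : 'I_K) (j : 'I_a) : 'I_(K * (a + b)) :=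
  Ordinal (fidx_subproof K a b k j).

Lemma fidx_inj2 (K a b : nat) (k k' : 'I_K) (j j' : 'I_a) :
  fidx K a b k j = fidx K a b k' j' -> k = k' /\ j = j'.
Proof.
move=> /(congr1 val) /= E.
have ja : (j < a + b)%N by apply: (leq_trans (ltn_ord j)); apply: leq_addr.
have ja' : (j' < a + b)%N by apply: (leq_trans (ltn_ord j')); apply: leq_addr.
have pos : (0 < a + b)%N by apply: leq_ltn_trans ja.
have Ek : val k = val k'.
  have := congr1 (fun x => x %/ (a + b))%N E.
  by rewrite /= !divnMDl // !divn_small // !addn0.
split; first exact: val_inj.
by apply: val_inj; move: E; rewrite Ek => /addnI.
Qed.

Lemma C1_reindex (K a b : nat) (F : 'I_(K * (a + b)) -> nat) :
  (\sum_(i | C1 K a b i) F i = \sum_k \sum_j F (fidx K a b k j))%N.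
Proof.
rewrite pair_big /=.
rewrite -(big_imset _ (h := fun p : 'I_K * 'I_a => fidx K a b p.1 p.2) (A := predT)); last first.
  move=> [k j] [k' j'] _ _ /= /fidx_inj2 [-> ->] //.
apply: eq_bigl => i; apply/idP/imsetP.
  move=> /existsP [k /andP [h1 h2]].
  have hj : (i - k * (a + b) < a)%N by lia.
  exists (k, Ordinal hj) => //; apply: val_inj => /=; lia.
move=> [[k j] _ ->]; apply/existsP; exists k; rewrite /Dk1 /=.
by rewrite leq_addr ltn_add2l ltn_ord.
Qed.


Definition dL (K a b : nat) (j : 'I_a) : demand K (K * (a + b)) := [ffun k => fidx K a b k j].
Definition dR (K a b : nat) (j : 'I_a) : demand K (K * (a + b)) := [ffun k => fidx K a b (ordS k) j].

Lemma dL_valid K a b j : valid_demand K a b (dL K a b j).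
Proof. by move=> k; rewrite /Dk ffunE /Dk1 /= leq_addr ltn_add2l ltn_ord. Qed.

Lemma dR_valid K a b j : valid_demand K a b (dR K a b j).
Proof.
move=> k; rewrite /Dk ffunE; apply/orP; right; apply/orP; right.
by rewrite /Dk3 /Dk1 /= addn1 leq_addr ltn_add2l ltn_ord.
Qed.

Lemma dL_inj K a b j : injective (dL K a b j).
Proof. by move=> k k'; rewrite !ffunE => /fidx_inj2 []. Qed.

Lemma dR_inj K a b j : injective (dR K a b j).
Proof. by move=> k k'; rewrite !ffunE => /fidx_inj2 [] /ordS_inj. Qed.

Lemma filt (I : finType) (P : pred I) (F : I -> nat) :
  (\sum_(s | P s) F s = \sum_s (P s) * F s)%N.
Proof. by rewrite big_mkcond; apply: eq_bigr => s _; case: (P s); rewrite ?mul1n ?mul0n. Qed.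

Lemma posL_lt K (r k : 'I_K) : (posL r k < K)%N.
Proof. have := ltn_ord r; have := ltn_ord k; rewrite /posL; case: ifP; lia. Qed.


Lemma jr_bound (K a b B L : nat)
  (S : 'I_K -> {set 'I_(K * (a + b)) * 'I_B})
  (enc : demand K (K * (a + b)) -> library (K * (a + b)) B -> {ffun 'I_L -> bool})
  (dec : 'I_K -> demand K (K * (a + b)) -> {ffun 'I_(K * (a + b)) * 'I_B -> bool} ->
         {ffun 'I_L -> bool} -> {ffun 'I_B -> bool})
  (Hdec : forall d : demand K (K * (a + b)), valid_demand K a b d ->
     forall (W : library (K * (a + b)) B) (k : 'I_K),
       dec k d (cache_content K (K * (a + b)) B S k W) (enc d W) = W (d k))
  (j : 'I_a) (r : 'I_K) :
  (\sum_k (2 * Wsize K (K * (a + b)) B S (fidx K a b k j) set0 + \sum_s ((posL r k < posL r s) + (posL r s < posL r (ord_pred k))) * Wsize K (K * (a + b)) B S (fidx K a b k j) [set s])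
   <= 2 * L)%N.
Proof.
have HL := leq_trans (count_P _ _ _ S _ (posL r) (dL_inj K a b j))
   (acyclic _ _ _ _ S enc dec _ (Hdec _ (dL_valid K a b j)) (posL r)).
have HR := leq_trans (count_P _ _ _ S _ (fun k => K - posL r k)%N (dR_inj K a b j))
   (acyclic _ _ _ _ S enc dec _ (Hdec _ (dR_valid K a b j)) (fun k => K - posL r k)%N).
have HL' : (\sum_k (Wsize K (K * (a + b)) B S (fidx K a b k j) set0 +
    \sum_s (posL r k < posL r s) * Wsize K (K * (a + b)) B S (fidx K a b k j) [set s]) <= L)%N.
  apply: leq_trans HL; apply: eq_leq; apply: eq_bigr => k _; by rewrite ffunE [in RHS]filt.
have HR' : (\sum_k (Wsize K (K * (a + b)) B S (fidx K a b (ordS k) j) set0 +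
    \sum_s (K - posL r k < K - posL r s) * Wsize K (K * (a + b)) B S (fidx K a b (ordS k) j) [set s]) <= L)%N.
  apply: leq_trans HR; apply: eq_leq; apply: eq_bigr => k _; by rewrite ffunE [in RHS]filt.
have HR'' : (\sum_k (Wsize K (K * (a + b)) B S (fidx K a b k j) set0 +
    \sum_s (posL r s < posL r (ord_pred k)) * Wsize K (K * (a + b)) B S (fidx K a b k j) [set s]) <= L)%N.
  apply: leq_trans HR'; apply: eq_leq.
  rewrite [RHS](reindex_inj (@ord_pred_inj K)).
  apply: eq_bigr => k _; rewrite ord_predK; congr (_ + _); apply: eq_bigr => s _.
  have h1 := posL_lt _ r s; have h2 := posL_lt _ r (ord_pred k).
  have -> : (K - posL r (ord_pred k) < K - posL r s)%N = (posL r s < posL r (ord_pred k))%N.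
    by apply/idP/idP; lia.
  by [].
rewrite mul2n -addnn.
apply: (leq_trans _ (leq_add HL' HR'')).
rewrite -big_split.
apply: leq_sum => k _.
apply: eq_leq.
rewrite mul2n -addnn -addnA -[RHS]addnA; congr (_ + _).
rewrite addnCA; congr (_ + _).
rewrite -big_split; apply: eq_bigr => s _; by rewrite mulnDl.
Qed.


Lemma nat_main (K a b B L : nat)
  (S : 'I_K -> {set 'I_(K * (a + b)) * 'I_B})
  (enc : demand K (K * (a + b)) -> library (K * (a + b)) B -> {ffun 'I_L -> bool})
  (dec : 'I_K -> demand K (K * (a + b)) -> {ffun 'I_(K * (a + b)) * 'I_B -> bool} ->
         {ffun 'I_L -> bool} -> {ffun 'I_B -> bool})
  (Hdec : forall d : demand K (K * (a + b)), valid_demand K a b d ->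
     forall (W : library (K * (a + b)) B) (k : 'I_K),
       dec k d (cache_content K (K * (a + b)) B S k W) (enc d W) = W (d k)) :
  (2 * K * (\sum_(i | C1 K a b i) Wsize K (K * (a + b)) B S i set0) +
   K.-1 * (\sum_(i | C1 K a b i) \sum_(s : 'I_K) Wsize K (K * (a + b)) B S i [set s])
   <= a * (K * (2 * L)))%N.
Proof.
have Hr : forall j : 'I_a,
  (\sum_k (2 * K * Wsize K (K * (a + b)) B S (fidx K a b k j) set0 +
     K.-1 * \sum_s Wsize K (K * (a + b)) B S (fidx K a b k j) [set s]) <= K * (2 * L))%N.
  move=> j.
  have H1 := leq_sum _ (fun (r : 'I_K) (_ : true) => jr_bound K a b B L S enc dec Hdec j r).
move: (H1 (index_enum _)) => {}H1.   rewrite sum_nat_const card_ord in H1.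
  apply: leq_trans H1.
  rewrite exchange_big; apply: leq_sum => k _; rewrite big_split sum_nat_const card_ord.
  apply: leq_add; first by rewrite mulnA [K * 2]mulnC.
  rewrite exchange_big big_distrr; apply: leq_sum => s _; rewrite -big_distrl.
  by apply: leq_mul => //; exact: count_r.
have H2 := leq_sum _ (fun (j : 'I_a) (_ : true) => Hr j).
move: (H2 (index_enum _)) => {}H2. rewrite sum_nat_const card_ord in H2.
apply: leq_trans H2; apply: eq_leq.
rewrite !C1_reindex !big_distrr -big_split [RHS]exchange_big.
apply: eq_bigr => k _.
rewrite [RHS]big_split !big_distrr.
by [].
Qed.

Import Order.TTheory GRing.Theory Num.Theory.
Local Open Scope ring_scope.

Theorem mainTheorem7 (K a b B Mbits L : nat)
  (S : 'I_K -> {set 'I_(K * (a + b)) * 'I_B})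
  (enc : demand K (K * (a + b)) -> library (K * (a + b)) B -> {ffun 'I_L -> bool})
  (dec : 'I_K -> demand K (K * (a + b)) -> {ffun 'I_(K * (a + b)) * 'I_B -> bool} ->
         {ffun 'I_L -> bool} -> {ffun 'I_B -> bool}) :
  (2 <= K)%N -> (1 <= a)%N -> (1 <= b)%N -> (0 < B)%N ->
  (forall k : 'I_K, #|S k| <= Mbits)%N ->
  (forall d : demand K (K * (a + b)), valid_demand K a b d ->
     forall (W : library (K * (a + b)) B) (k : 'I_K),
       dec k d (cache_content K (K * (a + b)) B S k W) (enc d W) = W (d k)) ->
  (a%:R)^-1 * alpha0 K a b B S + (K%:R - 1) / (2 * a%:R * K%:R) * alpha1 K a b B S
    <= L%:R / B%:R :> rat.
Proof.
move=> hK ha hb hB _ Hdec.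
have H := nat_main K a b B L S enc dec Hdec.
rewrite /alpha0 /alpha1.
set A0 := (\sum_(i | C1 K a b i) Wsize K (K * (a + b)) B S i set0)%N in H *.
set A1 := (\sum_(i | C1 K a b i) \sum_(s : 'I_K) Wsize K (K * (a + b)) B S i [set s])%N in H *.
have HK1 : (K.-1)%:R = K%:R - 1 :> rat by rewrite -subn1 natrB // ltnW.
have aP : (a%:R : rat) != 0 by rewrite pnatr_eq0 -lt0n.
have KP : (K%:R : rat) != 0 by rewrite pnatr_eq0 -lt0n ltnW.
have BP : (B%:R : rat) != 0 by rewrite pnatr_eq0 -lt0n.
have HR : (2 * K * A0 + K.-1 * A1)%N%:R <= (a * (K * (2 * L)))%N%:R :> rat by rewrite ler_nat.
have D : 0 < (2 * a%:R * K%:R * B%:R : rat).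
  by rewrite !mulr_gt0 // ltr0n // ltnW.
rewrite -(ler_pM2r D).
have -> : (a%:R^-1 * (A0%:R / B%:R) + (K%:R - 1) / (2 * a%:R * K%:R) * (A1%:R / B%:R)) *
   (2 * a%:R * K%:R * B%:R) = (2 * K * A0 + K.-1 * A1)%N%:R :> rat.
  rewrite natrD !natrM HK1; field.
  by rewrite aP KP BP.
have -> : (L%:R / B%:R) * (2 * a%:R * K%:R * B%:R) = (a * (K * (2 * L)))%N%:R :> rat.
  rewrite !natrM; field; exact: BP.
exact: HR.
Qed.
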